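(* Let $\mathcal X$ be a finite multi-set of real symmetric $2\times2$ matrices with $\lambda_1$ the unique largest eigenvalue of $\mathcal X$ (with eigenvector $u_1$, belonging to $X_1$, and $v_1\perp u_1$ a unit vector). Suppose the second largest eigenvalue $\lambda_2$ of $\mathcal X$ is unique and its associated eigenvector $u_2$ is not perpendicular to $u_1$. Then there exists $\varepsilon>0$ such that $$S':=\lambda_1u_1u_1^{\mathsf T}+(\lambda_2-\varepsilon)v_1v_1^{\mathsf T}\in\mathcal U(\mathcal X).$$
   Context: $\mathrm{Sym}(2)$ is the set of real symmetric $2\times2$ matrices; $A\le_{\mathrm L}B$ (Loewner order) means $B-A$ is positive semidefinite. $\mathcal U(\mathcal X):=\{Y\in\mathrm{Sym}(2):X\le_{\mathrm L}Y\ \forall X\in\mathcal X\}$. Each $X\in\mathcal X$ has spectral form $X=\lambda uu^{\mathsf T}+\mu vv^{\mathsf T}$, $\lambda\ge\mu$, $u\perp v$ unit vectors; ''the eigenvalues of $\mathcal X$'' means the multi-set of all these $\lambda,\mu$ (two per matrix) with their associated eigenvectors; an eigenvalue is unique if it occurs exactly once in this multi-set. *)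

(* Defs.v *)
From HB Require Import structures.
From mathcomp Require Import all_boot all_order all_algebra.
Set Implicit Arguments. Unset Strict Implicit. Unset Printing Implicit Defensive.
Import Order.TTheory GRing.Theory Num.Theory.
Local Open Scope ring_scope.

Section Defs.
Variable R : realFieldType.

Definition dot2 (x y : 'cV[R]_2) : R := (x^T *m y) 0 0.

Definition sym2 (A : 'M[R]_2) : Prop := A^T = A.

Definition psd2 (A : 'M[R]_2) : Prop :=
  sym2 A /\ forall x : 'cV[R]_2, 0 <= (x^T *m A *m x) 0 0.

Definition loewner_le (A B : 'M[R]_2) : Prop := psd2 (B - A).

(* U(X) for a finite family (multi-set) X indexed by a finite type I. *)
Definition upper_set (I : finType) (X : I -> 'M[R]_2) (Y : 'M[R]_2) : Prop :=
  sym2 Y /\ forall i, loewner_le (X i) Y.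

Definition proj2 (u : 'cV[R]_2) : 'M[R]_2 := u *m u^T.

Definition spectral_form (I : finType) (X : I -> 'M[R]_2)
    (lam mu : I -> R) (u v : I -> 'cV[R]_2) : Prop :=
  forall i, [/\ X i = lam i *: proj2 (u i) + mu i *: proj2 (v i),
                mu i <= lam i, dot2 (u i) (u i) = 1, dot2 (v i) (v i) = 1
              & dot2 (u i) (v i) = 0].

(* The multi-set of eigenvalues: two entries per matrix, indexed by I * bool
   (true = the larger eigenvalue lam with eigenvector u, false = mu with v). *)
Definition eigval (I : finType) (lam mu : I -> R) (e : I * bool) : R :=
  if e.2 then lam e.1 else mu e.1.
Definition eigvec (I : finType) (u v : I -> 'cV[R]_2) (e : I * bool) : 'cV[R]_2 :=
  if e.2 then u e.1 else v e.1.

End Defs.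

(* Main.v *)
Require Import Defs.
From HB Require Import structures.
From mathcomp Require Import all_boot all_order all_algebra.
From mathcomp Require Import ring lra.
Import Order.TTheory GRing.Theory Num.Theory.
Local Open Scope ring_scope.

Section H.
Variable R : realFieldType.

Lemma dot2E (x y : 'cV[R]_2) : dot2 x y = x 0 0 * y 0 0 + x 1 0 * y 1 0.
Proof.
rewrite /dot2 mxE !big_ord_recr big_ord0 /= !mxE add0r.
have -> : widen_ord (leqnSn 1) ord_max = 0 :> 'I_2 by apply/val_inj.
by have -> : ord_max = 1 :> 'I_2 by apply/val_inj.
Qed.

Lemma dot2C (x y : 'cV[R]_2) : dot2 x y = dot2 y x.
Proof. by rewrite !dot2E mulrC [x 1 0 * _]mulrC. Qed.

Definition qf (A : 'M[R]_2) (x : 'cV[R]_2) := (x^T *m A *m x) 0 0.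

Lemma qfD A B x : qf (A + B) x = qf A x + qf B x.
Proof. by rewrite /qf mulmxDr mulmxDl mxE. Qed.

Lemma qfB A B x : qf (A - B) x = qf A x - qf B x.
Proof. by rewrite /qf mulmxBr mulmxBl mxE !mxE. Qed.

Lemma qfZ a A x : qf (a *: A) x = a * qf A x.
Proof. by rewrite /qf -scalemxAr -scalemxAl mxE. Qed.

Lemma qf_proj w x : qf (proj2 w) x = dot2 w x ^+ 2.
Proof.
rewrite /qf /proj2 mulmxA -mulmxA mxE big_ord1 -/(dot2 x w).
rewrite -[(w^T *m x) 0 0]/(dot2 w x) dot2C expr2 //.
Qed.

Lemma sym_proj w : sym2 (proj2 w : 'M[R]_2).
Proof. by rewrite /sym2 /proj2 trmx_mul trmxK. Qed.

Lemma parseval (a b x y : 'cV[R]_2) : dot2 a a = 1 -> dot2 b b = 1 -> dot2 a b = 0 ->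
  dot2 a x * dot2 a y + dot2 b x * dot2 b y = dot2 x y.
Proof.
rewrite !dot2E => hA hB hC.
set u0 := a 0 0; set u1 := a 1 0; set v0 := b 0 0; set v1 := b 1 0.
set D := u0 * v1 - u1 * v0.
have hD : D ^+ 2 = 1.
  have -> : D ^+ 2 = (u0*u0+u1*u1)*(v0*v0+v1*v1) - (u0*v0+u1*v1)^+2 by rewrite /D; ring.
  by rewrite hA hB hC; ring.
have hv1 : v1 = u0 * D.
  have : u0 * D - v1 = v1 * (u0*u0+u1*u1 - 1) - u1 * (u0*v0+u1*v1) by rewrite /D; ring.
  rewrite hA hC => h; lra.
have hv0 : v0 = - (u1 * D).
  have : u1 * D + v0 = u0 * (u0*v0+u1*v1) - v0 * (u0*u0+u1*u1 - 1) by rewrite /D; ring.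
  rewrite hA hC => h; lra.
have E1 : u0*u0 + v0*v0 = 1.
  rewrite hv0 mulNr mulrN opprK.
  have -> : u1 * D * (u1 * D) = u1 * u1 * D^+2 by ring.
  by rewrite hD mulr1.
have E2 : u1*u1 + v1*v1 = 1.
  rewrite hv1.
  have -> : u0 * D * (u0 * D) = u0 * u0 * D^+2 by ring.
  by rewrite hD mulr1 addrC.
have E3 : u0*u1 + v0*v1 = 0.
  rewrite hv0 hv1.
  have -> : u0 * u1 + - (u1 * D) * (u0 * D) = u0 * u1 * (1 - D^+2) by ring.
  by rewrite hD subrr mulr0.
have -> : (u0 * x 0 0 + u1 * x 1 0) * (u0 * y 0 0 + u1 * y 1 0) +
  (v0 * x 0 0 + v1 * x 1 0) * (v0 * y 0 0 + v1 * y 1 0) =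
  x 0 0 * y 0 0 * (u0*u0 + v0*v0) + x 1 0 * y 1 0 * (u1*u1 + v1*v1)
  + (x 0 0 * y 1 0 + x 1 0 * y 0 0) * (u0*u1 + v0*v1) by ring.
by rewrite E1 E2 E3 !mulr1 mulr0 addr0.
Qed.

Lemma key (al d c s p q eps : R) : 0 < al -> 0 < d -> c^+2 + s^+2 = 1 -> 0 <= eps ->
  eps * (al + d) <= al * d * c^+2 ->
  0 <= (al + d) * p^+2 + (d - eps) * q^+2 - d * (c * p + s * q)^+2.
Proof.
move=> hal hd hcs he hle.
set Q := _ - _.
set T := al + d * s^+2.
have hT : 0 < T by rewrite /T; have := sqr_ge0 s; nra.
have hTQ : T * Q = (T * p - d * c * s * q)^+2 + (al * d * c^+2 - eps * T) * q^+2
   - T * d * (c^+2 + s^+2 - 1) * (p^+2 + q^+2) by rewrite /Q /T; ring.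
rewrite hcs subrr mulr0 mul0r subr0 in hTQ.
have hs : s^+2 <= 1 by have := sqr_ge0 c; lra.
have h1 : eps * T <= eps * (al + d) by rewrite /T; apply: ler_wpM2l => //; nra.
have h2 : 0 <= T * Q by rewrite hTQ; apply: addr_ge0; [exact: sqr_ge0| apply: mulr_ge0; [lra|exact: sqr_ge0]].
by rewrite pmulr_rge0 in h2.
Qed.

Lemma symc a b (w z : 'cV[R]_2) :
  (a *: proj2 w + b *: proj2 z)^T = a *: proj2 w + b *: proj2 z.
Proof. by rewrite linearD /= !linearZ /= !sym_proj. Qed.
End H.

Theorem lemma7 (R : realFieldType) (I : finType) (X : I -> 'M[R]_2)
    (lam mu : I -> R) (u v : I -> 'cV[R]_2)
    (Hspec : spectral_form X lam mu u v)
    (e1 e2 : I * bool) (v1 : 'cV[R]_2)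
    (H1 : forall e, e != e1 -> eigval lam mu e < eigval lam mu e1)
    (Hv1 : dot2 v1 v1 = 1) (Hv1u1 : dot2 (eigvec u v e1) v1 = 0)
    (H12 : e2 != e1)
    (H2 : forall e, e != e1 -> e != e2 -> eigval lam mu e < eigval lam mu e2)
    (Hperp : dot2 (eigvec u v e2) (eigvec u v e1) != 0) :
  exists eps : R, 0 < eps /\
    upper_set X (eigval lam mu e1 *: proj2 (eigvec u v e1)
                 + (eigval lam mu e2 - eps) *: proj2 v1).
Proof.
have neqb (i j : I) (b c : bool) : b != c -> (i, b) != (j, c).
  by move=> h; rewrite xpair_eqE negb_and h orbT.
have neqi (i j : I) (b c : bool) : i != j -> (i, b) != (j, c).
  by move=> h; rewrite xpair_eqE negb_and h.
case: e1 H1 Hv1u1 H12 H2 Hperp => i1 b1 H1 Hv1u1 H12 H2 Hperp.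
have hb1 : b1 = true.
  case: b1 H1 {H12 H2 Hperp Hv1u1} => // H1.
  have := H1 (i1, true) (@neqb _ _ true false isT).
  by case: (Hspec i1) => _ hle _ _ _; rewrite /eigval /= => h; lra.
subst b1.
case: e2 H12 H2 Hperp => i2 b2 H12 H2 Hperp.
have hi2 : i2 != i1.
  apply/negP => /eqP hi; subst i2.
  case: b2 H12 H2 Hperp; first by rewrite eqxx.
  move=> _ _.
  by case: (Hspec i1) => _ _ _ _ huv; rewrite /eigvec /= (@dot2C _ (v i1)) huv eqxx.
have hb2 : b2 = true.
  case: b2 H12 H2 Hperp => // _ H2 _.
  have := H2 (i2, true) (neqi _ _ _ _ hi2) (@neqb _ _ true false isT).
  by case: (Hspec i2) => _ hle _ _ _; rewrite /eigval /= => h; lra.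
subst b2.
rewrite /eigval /eigvec /= in H1 H2 Hperp Hv1u1 *.
pose P := fun e : I * bool => (e != (i1, true)) && (e != (i2, true)).
have Pe0 : P (i1, false) by rewrite /P !neqb.
case: (arg_maxP (eigval lam mu) Pe0) => e3 /andP[P31 P32] Hmax.
have g3 : eigval lam mu e3 < lam i2 := H2 e3 P31 P32.
have hm1 : mu i1 <= eigval lam mu e3 := Hmax (i1, false) Pe0.
have hL12 : lam i2 < lam i1 := H1 (i2, true) (neqi _ _ _ _ hi2).
have hm2 : mu i2 < lam i2 := H2 (i2, false) (neqi _ _ _ _ hi2) (@neqb _ _ false true isT).
set g := lam i2 - eigval lam mu e3.
set c := dot2 (u i2) (u i1).
set d := lam i2 - mu i2.
set al := lam i1 - lam i2.
have hc2 : 0 < c ^+ 2 by rewrite exprn_even_gt0.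
have hal : 0 < al by rewrite /al; lra.
have hd : 0 < d by rewrite /d; lra.
have hg : 0 < g by rewrite /g; lra.
set eps2 := al * d * c ^+ 2 / (al + d).
have he2 : 0 < eps2.
  rewrite /eps2 divr_gt0 //; last by rewrite addr_gt0.
  by rewrite mulr_gt0 // mulr_gt0.
exists (Order.min g eps2).
have heg : Order.min g eps2 <= g by rewrite ge_min lexx.
have hee : Order.min g eps2 <= eps2 by rewrite ge_min lexx orbT.
have hepos : 0 < Order.min g eps2 by rewrite lt_min hg he2.
set eps := Order.min g eps2 in heg hee hepos *.
have heg2 : eps <= lam i2 - eigval lam mu e3 by [].
have hee2 : eps * (al + d) <= al * d * c ^+ 2.
  by rewrite -ler_pdivlMr // addr_gt0.
case: (Hspec i1) => _ _ hu1 _ _.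
split => //; split.
  by rewrite /sym2 symc.
move=> i.
case: (Hspec i) => hXi hle hu hv huv.
split.
  by rewrite /sym2 linearB /= symc hXi symc.
move=> x; rewrite -/(qf _ _ x) qfB qfD !qfZ hXi qfD !qfZ !qf_proj.
have hP1 : dot2 (u i1) x ^+ 2 + dot2 v1 x ^+ 2 = dot2 x x.
  by rewrite !expr2 parseval.
have hPi : dot2 (u i) x ^+ 2 + dot2 (v i) x ^+ 2 = dot2 x x.
  by rewrite !expr2 parseval.
have hp := sqr_ge0 (dot2 (u i1) x).
have hq := sqr_ge0 (dot2 v1 x).
have hb := sqr_ge0 (dot2 (v i) x).
case: (eqVneq i i1) => [ei|hi1].
  subst i.
  have hqb : dot2 (v i1) x ^+ 2 = dot2 v1 x ^+ 2 by lra.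
  rewrite hqb.
  have h : 0 <= (lam i2 - eps - mu i1) * dot2 v1 x ^+ 2.
    by apply: mulr_ge0 => //; lra.
  lra.
case: (eqVneq i i2) => [ei|hi2'].
  subst i.
  have ha : dot2 (u i2) x = c * dot2 (u i1) x + dot2 v1 (u i2) * dot2 v1 x.
    by rewrite -(@parseval _ (u i1) v1 (u i2) x) // /c (@dot2C _ (u i2)).
  have hcs : c ^+ 2 + dot2 v1 (u i2) ^+ 2 = 1.
    by rewrite /c (@dot2C _ (u i2)) !expr2 (@parseval _ (u i1) v1) // hu.
  have hk := @key _ al d c _ (dot2 (u i1) x) (dot2 v1 x) eps hal hd hcs (ltW hepos).
  have := hk hee2.
  have hb2 : dot2 (v i2) x ^+ 2 = dot2 (u i1) x ^+ 2 + dot2 v1 x ^+ 2 - dot2 (u i2) x ^+ 2 by lra.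
  rewrite hb2 ha /al /d => h; lra.
have hli : lam i <= eigval lam mu e3.
  by apply: (Hmax (i, true)); rewrite /P !neqi.
have hq2 : dot2 v1 x ^+ 2 = dot2 (u i) x ^+ 2 + dot2 (v i) x ^+ 2 - dot2 (u i1) x ^+ 2 by lra.
rewrite hq2.
have ha := sqr_ge0 (dot2 (u i) x).
have h1 : 0 <= (lam i1 - (lam i2 - eps)) * dot2 (u i1) x ^+ 2 by apply: mulr_ge0 => //; lra.
have h2 : 0 <= (lam i2 - eps - lam i) * (dot2 (u i) x ^+ 2 + dot2 (v i) x ^+ 2).
  by apply: mulr_ge0; lra.
have h3 : 0 <= (lam i - mu i) * dot2 (v i) x ^+ 2 by apply: mulr_ge0 => //; lra.
lra.
Qed.
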